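(* Let $u$ be a fast decreasing distribution on $\mathbb R^D$ (so that it defines a linear functional on $\mathbb C[\boldsymbol x]$), let $\mathcal Q_2\in\mathbb C[\boldsymbol x]$ have complex zero set $Z(\mathcal Q_2)$ disjoint from $\operatorname{supp}u$, and let $\check u$ be a linear functional on $\mathbb C[\boldsymbol x]$ with $\mathcal Q_2\check u=u$. Assume $u$ and $\check u$ are quasi-definite, with quasi-tau matrices $H_{[l]}$ and $\check H_{[l]}$ respectively, and let $\check{\boldsymbol J}=(\check J_1,\dots,\check J_D)$ with $\check J_a=\check S\Lambda_a\check S^{-1}$. Then for every $k\ge1$ $$\det\big((\mathcal Q_2(\check{\boldsymbol J}))^{[k]}\big)=\prod_{l=0}^{k-1}\frac{\det H_{[l]}}{\det\check H_{[l]}},$$ and in particular $(\mathcal Q_2(\check{\boldsymbol J}))^{[k]}$ is nonsingular.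
   Context: $D\ge1$, $\boldsymbol x=(x_1,\dots,x_D)^\top$, $\mathbb C[\boldsymbol x]$ complex polynomials. For $k\in\mathbb Z_+$, $[k]=\{\boldsymbol\alpha\in\mathbb Z_+^D:|\boldsymbol\alpha|=k\}$, $|[k]|=\binom{D+k-1}{k}$. Multi-indices are ordered by graded lexicographic order; $\chi(\boldsymbol x)$ is the semi-infinite column vector of all monomials $\boldsymbol x^{\boldsymbol\alpha}$ in this order, with blocks $\chi_{[k]}=(\boldsymbol x^{\boldsymbol\alpha})_{\boldsymbol\alpha\in[k]}$. Semi-infinite matrices are partitioned accordingly into blocks $A_{[k],[l]}\in\mathbb C^{|[k]|\times|[l]|}$, and $A^{[k]}$ denotes the truncation to block rows and columns $0,\dots,k-1$. Spectral matrices: $(\Lambda_a)_{\boldsymbol\alpha,\boldsymbol\beta}=\delta_{\boldsymbol\alpha+\boldsymbol e_a,\boldsymbol\beta}$, $a=1,\dots,D$; for a polynomial $Q$, $Q(\boldsymbol\Lambda)=Q(\Lambda_1,\dots,\Lambda_D)$ and similarly $Q(\check{\boldsymbol J})$. For a linear functional $u$, $\langle Qu,P\rangle:=\langle u,QP\rangle$; its moment matrix is $G=\langle u,\chi\chi^\top\rangle$ (entrywise); $u$ is quasi-definite if $\det G^{[k]}\neq0$ for all $k\ge1$, and then $G=S^{-1}HS^{-\top}$ with $S$ block lower unitriangular and $H$ block diagonal with blocks $H_{[k]}$ (quasi-tau matrices). The same notation with a check refers to $\check u$. *)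

(* Defs.v *)
From HB Require Import structures.
From mathcomp Require Import all_boot all_order all_algebra.
From mathcomp Require Import reals.
From mathcomp Require Import complex.
From mathcomp Require Import mpoly.
Set Implicit Arguments. Unset Strict Implicit. Unset Printing Implicit Defensive.
Import Order.TTheory GRing.Theory Num.Theory.
Local Open Scope ring_scope.

Section SemiInfinite.
Variable (C : fieldType) (D : nat).

Notation mi := 'X_{1..D}.

Definition simx := mi -> mi -> C.

(* compositions: all lists of length n of naturals summing to l, in
   lexicographic order (decreasing first entry first: x1^l comes first) *)
Fixpoint comps (n l : nat) : seq (seq nat) :=
  match n with
  | 0 => if l == 0%N then [:: [::]] else [::]
  | n'.+1 => flatten [seq [seq i :: s | s <- comps n' (l - i)] | i <- rev (iota 0 l.+1)]
  end.

Definition mons (l : nat) : seq mi :=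
  [seq [multinom (nth 0%N s i) | i < D] | s <- comps D l].

(* all multi-indices of degree < k, in graded lexicographic order *)
Definition idx (k : nat) : seq mi := flatten [seq mons l | l <- iota 0 k].

Definition sqmx (s : seq mi) (A : simx) : 'M[C]_(size s) :=
  \matrix_(i < size s, j < size s) A (nth 0%MM s i) (nth 0%MM s j).

Definition trunc (k : nat) (A : simx) := sqmx (idx k) A.

Definition blk (l : nat) (A : simx) := sqmx (mons l) A.

(* Product of semi-infinite matrices A B, where the left factor A is known to
   satisfy A alpha beta = 0 whenever |beta| > |alpha| + c; the sum is then the
   (finite) full matrix product. *)
Definition bprod (c : nat) (A B : simx) : simx :=
  fun a g => \sum_(b <- idx (mdeg a + c).+1) A a b * B b g.

Definition simx1 : simx := fun a b => (a == b)%:R.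
Definition simxT (A : simx) : simx := fun a b => A b a.

Definition unitmi (a : 'I_D) : mi := [multinom ((i == a) : nat) | i < D].

Definition Lambda (a : 'I_D) : simx := fun al be => ((al + unitmi a)%MM == be)%:R.

Definition block_lower_unitri' (S : simx) :=
  (forall a b, (mdeg a < mdeg b)%N -> S a b = 0) /\
  (forall a b, mdeg a = mdeg b -> S a b = (a == b)%:R).
Definition block_diag (H : simx) := forall a b, mdeg a <> mdeg b -> H a b = 0.

Definition quasi_tau_fact (G S Sinv H : simx) :=
  [/\ block_lower_unitri' S /\ block_lower_unitri' Sinv,
      bprod 0 S Sinv = simx1 /\ bprod 0 Sinv S = simx1,
      block_diag H & G = bprod 0 (bprod 0 Sinv H) (simxT Sinv)].

Definition moment (u : {mpoly C[D]} -> C) : simx :=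
  fun a b => u ('X_[a] * 'X_[b]).

Definition quasi_definite (u : {mpoly C[D]} -> C) :=
  forall k, (1 <= k)%N -> \det (trunc k (moment u)) != 0.

Definition lin_functional (u : {mpoly C[D]} -> C) :=
  forall (c : C) (p q : {mpoly C[D]}), u (c *: p + q) = c * u p + u q.

(* monomial evaluated at commuting band-1 semi-infinite matrices J:
   J_0^{m_0} ( J_1^{m_1} ( ... I)) *)
Definition simx_mon (J : 'I_D -> simx) (m : mi) : simx :=
  foldr (fun a B => iter (m a) (bprod 1 (J a)) B) simx1 (enum 'I_D).

Definition simx_poly (Q : {mpoly C[D]}) (J : 'I_D -> simx) : simx :=
  fun a b => \sum_(m <- msupp Q) Q@_m * simx_mon J m a b.

Definition jacobi (S Sinv : simx) (a : 'I_D) : simx :=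
  bprod 1 (bprod 0 S (Lambda a)) Sinv.

End SemiInfinite.

(* Main.v *)
Require Import Defs.
From HB Require Import structures.
From mathcomp Require Import all_boot all_order all_algebra.
From mathcomp Require Import reals complex mpoly.
From mathcomp Require Import zify.
From Stdlib Require Import FunctionalExtensionality.
Import GRing.Theory.
Local Open Scope ring_scope.
Set Implicit Arguments. Unset Strict Implicit. Unset Printing Implicit Defensive.

Lemma mem_comps n l s : (s \in comps n l) = (size s == n) && (sumn s == l).
Proof.
elim: n l s => [|n IH] l s /=.
  by case: s => [|x s]; case: l => //.
have memi i : (i \in rev (0%N :: iota 1 l)) = (i <= l)%N.
  by rewrite mem_rev -[0%N :: _]/(iota 0 l.+1) mem_iota.
apply/flatten_mapP/idP.
  case=> i; rewrite memi => il /mapP [t].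
  rewrite IH => /andP[/eqP st /eqP sut] -> /=.
  by rewrite st sut subnKC // !eqxx.
case: s => [|i t] //= /andP[st /eqP sut].
exists i; first by rewrite memi -sut leq_addr.
apply/mapP; exists t => //; rewrite IH -sut addKn.
by rewrite eqSS in st; rewrite st eqxx.
Qed.

Lemma uniq_comps n l : uniq (comps n l).
Proof.
elim: n l => [|n IH] l /=; first by case: l.
apply: allpairs_uniq_dep => //.
  by rewrite rev_uniq -[0%N :: _]/(iota 0 l.+1) iota_uniq.
by move=> [x1 y1] [x2 y2] _ _ /= [-> ->].
Qed.
Section Idx.
Variable D : nat.
Local Notation mi := 'X_{1..D}.

Lemma sum_nth_ord (s : seq nat) : size s = D ->
  (\sum_(i < D) nth 0%N s i)%N = sumn s.
Proof.
move=> sz; rewrite sumnE (big_nth 0%N) sz big_mkord //.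
Qed.

Lemma mem_mons l (m : mi) : (m \in mons D l) = (mdeg m == l).
Proof.
apply/mapP/eqP.
  case=> s; rewrite mem_comps => /andP[/eqP sz /eqP su] ->.
  by rewrite mdegE; under eq_bigr do rewrite mnmE; rewrite sum_nth_ord.
move=> dm; exists (val (val m)).
  rewrite mem_comps size_tuple eqxx -dm mdegE /=.
  rewrite -sum_nth_ord ?size_tuple //.
  by apply/eqP; apply: eq_bigr => i _; rewrite mnm_tnth (tnth_nth 0%N).
by apply/mnmP => i; rewrite mnmE mnm_tnth (tnth_nth 0%N).
Qed.

Lemma uniq_mons l : uniq (mons D l).
Proof.
rewrite map_inj_in_uniq ?uniq_comps // => s t.
rewrite !mem_comps => /andP[/eqP ss _] /andP[/eqP st _] E.
apply: (@eq_from_nth _ 0%N); first by rewrite ss st.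
move=> i; rewrite ss => iD.
by have := congr1 (fun m : mi => m (Ordinal iD)) E; rewrite !mnmE.
Qed.

Lemma idxS k : idx D k.+1 = idx D k ++ mons D k.
Proof. by rewrite /idx -addn1 iotaD map_cat flatten_cat /= cats0. Qed.

Lemma mem_idx k (m : mi) : (m \in idx D k) = (mdeg m < k)%N.
Proof.
elim: k => [|k IH]; first by rewrite ltn0 /idx /= in_nil.
by rewrite idxS mem_cat IH mem_mons ltnS orbC -leq_eqVlt.
Qed.

Lemma uniq_idx k : uniq (idx D k).
Proof.
elim: k => [|k IH] //; rewrite idxS cat_uniq IH uniq_mons /= andbT.
apply/hasPn => m; rewrite mem_mons mem_idx => /eqP ->; by rewrite ltnn.
Qed.

Lemma sum_idx_ext (C : nmodType) n m (F : mi -> C) : (n <= m)%N ->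
  (forall b, (n <= mdeg b)%N -> (mdeg b < m)%N -> F b = 0) ->
  \sum_(b <- idx D n) F b = \sum_(b <- idx D m) F b.
Proof.
elim: m => [|m IH]; first by rewrite leqn0 => /eqP ->.
rewrite leq_eqVlt => /orP[/eqP -> //|]; rewrite ltnS => nm F0.
rewrite idxS big_cat /= -IH // => [|b ? ?]; last by apply: F0 => //; apply: ltnW.
rewrite [X in _ = _ + X]big1_seq ?addr0 // => b /andP[_]; rewrite mem_mons => /eqP db.
by apply: F0; rewrite db.
Qed.

Lemma sum_delta (C : pzSemiRingType) K (b0 : mi) (F : mi -> C) : (mdeg b0 < K)%N ->
  \sum_(b <- idx D K) (b0 == b)%:R * F b = F b0.
Proof.
move=> dK; rewrite (bigD1_seq b0) ?uniq_idx ?mem_idx //= eqxx mul1r.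
by rewrite big1 ?addr0 // => b; rewrite eq_sym => /negbTE ->; rewrite mul0r.
Qed.

Lemma idx_nth_deg k i j : (i <= j)%N -> (j < size (idx D k))%N ->
  (mdeg (nth 0%MM (idx D k) i) <= mdeg (nth 0%MM (idx D k) j))%N.
Proof.
move=> ij; elim: k => [|k IH] //; rewrite idxS size_cat => jlt.
rewrite !nth_cat; have il : (i <= j)%N := ij.
case: ltnP => ik; case: ltnP => jk.
- exact: IH.
- have := mem_nth 0%MM (ik); rewrite mem_idx => /ltnW/leq_trans; apply.
  have: nth 0%MM (mons D k) (j - size (idx D k)) \in mons D k.
    by apply: mem_nth; rewrite ltn_subLR.
  by rewrite mem_mons => /eqP ->.
- by have := leq_ltn_trans (leq_trans ik ij) jk; rewrite ltnn.
- have: nth 0%MM (mons D k) (i - size (idx D k)) \in mons D k.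
    by apply: mem_nth; rewrite ltn_subLR // (leq_ltn_trans ij).
  have: nth 0%MM (mons D k) (j - size (idx D k)) \in mons D k.
    by apply: mem_nth; rewrite ltn_subLR.
  by rewrite !mem_mons => /eqP -> /eqP ->.
Qed.

End Idx.
Section Mx.
Variables (C : fieldType) (D : nat).
Local Notation mi := 'X_{1..D}.
Local Notation simx := (simx C D).

Definition lowc (c : nat) (A : simx) :=
  forall a b : mi, (mdeg a + c < mdeg b)%N -> A a b = 0.

Lemma sqmx_mul (s : seq mi) (A B : simx) :
  sqmx s A *m sqmx s B = sqmx s (fun a g => \sum_(b <- s) A a b * B b g).
Proof.
apply/matrixP => i j; rewrite !mxE (big_nth 0%MM) big_mkord.
by apply: eq_bigr => k _; rewrite !mxE.
Qed.

Lemma trunc_T k (A : simx) : trunc k (simxT A) = (trunc k A)^T.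
Proof. by apply/matrixP => i j; rewrite !mxE. Qed.

Lemma det_unitri k (S : simx) : block_lower_unitri' S -> \det (trunc k S) = 1.
Proof.
move=> [S0 S1]; rewrite det_trig.
  by rewrite big1 // => i _; rewrite mxE S1 // eqxx.
apply/is_trig_mxP => i j ij; rewrite mxE.
have := idx_nth_deg (ltnW ij) (ltn_ord j); rewrite leq_eqVlt => /orP[/eqP E|]; last exact: S0.
rewrite S1 // nth_uniq ?uniq_idx ?ltn_ord //.
by rewrite ltn_eqF.
Qed.

Lemma det_castmx n m (e : n = m) (M : 'M[C]_n) : \det (castmx (e, e) M) = \det M.
Proof. by case: m / e; rewrite castmx_id. Qed.

Lemma det_sqmx_cat (s1 s2 : seq mi) (A : simx) :
  (forall a b, a \in s1 -> b \in s2 -> A a b = 0 /\ A b a = 0) ->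
  \det (sqmx (s1 ++ s2) A) = \det (sqmx s1 A) * \det (sqmx s2 A).
Proof.
move=> A0; have E := size_cat s1 s2.
have -> : sqmx (s1 ++ s2) A =
   castmx (esym E, esym E) (block_mx (sqmx s1 A) 0 0 (sqmx s2 A)).
  apply/matrixP => i j; rewrite castmxE !mxE.
  case: (fintype.splitP (cast_ord _ i)) => i1 /= ei; rewrite !mxE;
  case: (fintype.splitP (cast_ord _ j)) => j1 /= ej;
    rewrite ?mxE !nth_cat ei ej ?ltn_ord //.
  all: rewrite ?ltnNge ?leq_addr /= ?addKn.
  - by case: (A0 _ _ (mem_nth 0%MM (ltn_ord i1)) (mem_nth 0%MM (ltn_ord j1))).
  - by case: (A0 _ _ (mem_nth 0%MM (ltn_ord j1)) (mem_nth 0%MM (ltn_ord i1))).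
  - by [].
by rewrite det_castmx det_ublock.
Qed.

Lemma det_blockdiag k (H : simx) : block_diag H ->
  \det (trunc k H) = \prod_(l < k) \det (blk l H).
Proof.
move=> Hd; elim: k => [|k IH]; first by rewrite big_ord0 det_mx00.
rewrite big_ord_recr /= -IH /trunc /blk idxS det_sqmx_cat // => a b.
rewrite mem_idx mem_mons => ak /eqP bk.
by split; apply: Hd; rewrite bk => E; move: ak; rewrite E ltnn.
Qed.

Lemma bprodE c (A B : simx) K a g : lowc c A -> (mdeg a + c < K)%N ->
  bprod c A B a g = \sum_(b <- idx D K) A a b * B b g.
Proof.
move=> Al aK; rewrite /bprod; apply: sum_idx_ext => // b ab _.
by rewrite Al ?mul0r.
Qed.

Lemma trunc_bprod0 k (A B : simx) : lowc 0 A ->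
  trunc k (bprod 0 A B) = trunc k A *m trunc k B.
Proof.
move=> Al; rewrite /trunc sqmx_mul; apply/matrixP => i j; rewrite !mxE.
apply: bprodE => //; rewrite addn0 -mem_idx; exact: mem_nth.
Qed.

End Mx.
Lemma mdeg_unitmi D (i : 'I_D) : mdeg (unitmi i) = 1%N.
Proof.
rewrite mdegE (bigD1 i) //= mnmE eqxx big1 // => j /negbTE ji.
by rewrite mnmE ji.
Qed.

Section Jac.
Variables (C : fieldType) (D : nat).
Local Notation mi := 'X_{1..D}.
Local Notation simx := (simx C D).
Variables (Sc Sci : simx).
Hypothesis (hSc : block_lower_unitri' Sc) (hSci : block_lower_unitri' Sci).
Hypothesis (hinv : bprod 0 Sci Sc = @simx1 C D).

Lemma low0 (S : simx) : block_lower_unitri' S -> lowc 0 S.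
Proof. by move=> [S0 _] a b; rewrite addn0; apply: S0. Qed.

Lemma jacE i a c : jacobi Sc Sci i a c =
  \sum_(e <- idx D (mdeg a + 0).+1) Sc a e * Sci (e + unitmi i)%MM c.
Proof.
rewrite /jacobi {1}/bprod.
under eq_bigr do rewrite /bprod big_distrl.
rewrite exchange_big /=; apply: eq_big_seq => e; rewrite mem_idx => ea.
under eq_bigr do rewrite /Lambda -mulrA.
rewrite -big_distrr /= sum_delta //.
by rewrite mdegD mdeg_unitmi; move: ea; lia.
Qed.

Lemma jac_step i (Z : simx) a g :
  bprod 1 (jacobi Sc Sci i) (bprod 0 Sc Z) a g =
  bprod 0 Sc (fun b g => Z (b + unitmi i)%MM g) a g.
Proof.
have eqL : (mdeg a + 1).+1 = (mdeg a).+2 by rewrite addn1.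
rewrite {1}/bprod eqL.
rewrite (eq_big_seq (fun c => jacobi Sc Sci i a c *
          \sum_(f <- idx D (mdeg a).+2) Sc c f * Z f g)); last first.
  move=> c; rewrite mem_idx => ca; congr (_ * _); apply: bprodE; first exact: low0.
  by rewrite addn0.
under eq_bigr do rewrite jacE big_distrl.
rewrite exchange_big /= /bprod; apply: eq_big_seq => e; rewrite mem_idx addn0 => ea.
under eq_bigr do rewrite -mulrA.
rewrite -big_distrr /=; congr (_ * _).
under eq_bigr do rewrite big_distrr.
rewrite exchange_big /=.
have dK : (mdeg (e + unitmi i)%MM + 0 < (mdeg a).+2)%N.
  by rewrite mdegD mdeg_unitmi; move: ea; lia.
rewrite (eq_bigr (fun f => ((e + unitmi i)%MM == f)%:R * Z f g)); last first.
  move=> f _; under eq_bigr do rewrite mulrA; rewrite -big_distrl /=; congr (_ * _).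
  by rewrite -(bprodE _ _ (low0 hSci) dK) hinv.
by rewrite sum_delta //; rewrite addn0 in dK.
Qed.

Hypothesis (hinv' : bprod 0 Sc Sci = @simx1 C D).

Definition shiftm (n : mi) : simx := fun b g => Sci (b + n)%MM g.

Lemma iter_step i k n :
  iter k (bprod 1 (jacobi Sc Sci i)) (bprod 0 Sc (shiftm n)) =
  bprod 0 Sc (shiftm (iter k (fun x => (x + unitmi i)%MM) n)).
Proof.
elim: k => [|k IH] //=; rewrite IH.
apply: functional_extensionality => a; apply: functional_extensionality => g.
rewrite jac_step /bprod; apply: eq_bigr => b _.
by rewrite /shiftm -addmA [(unitmi i + _)%MM]addmC.
Qed.

Definition shm (m : mi) (r : seq 'I_D) : mi :=
  foldr (fun a n => iter (m a) (fun x => (x + unitmi a)%MM) n) 0%MM r.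

Lemma mon_gen (m : mi) (r : seq 'I_D) :
  foldr (fun a B => iter (m a) (bprod 1 (jacobi Sc Sci a)) B) (@simx1 C D) r =
  bprod 0 Sc (shiftm (shm m r)).
Proof.
elim: r => [|a r IH] /=.
  rewrite -hinv'; congr bprod.
  apply: functional_extensionality => b; apply: functional_extensionality => g.
  by rewrite /shiftm addm0.
by rewrite IH iter_step.
Qed.

Lemma iter_shiftE k (a : 'I_D) (n : mi) j :
  (iter k (fun x => (x + unitmi a)%MM) n) j = (n j + k * (j == a))%N.
Proof.
elim: k => [|k IH] /=; first by rewrite addn0.
by rewrite mnmDE IH mnmE mulSn; lia.
Qed.

Lemma shm_enum (m : mi) : shm m (enum 'I_D) = m.
Proof.
apply/mnmP => j.
have -> : forall r, (shm m r) j = (\sum_(a <- r) m a * (j == a))%N.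
  elim=> [|a r IH] /=; first by rewrite big_nil mnmE.
  by rewrite big_cons iter_shiftE IH addnC.
rewrite big_enum /= (bigD1 j) //= eqxx muln1 big1 ?addn0 // => a /negbTE aj.
by rewrite eq_sym aj muln0.
Qed.

Lemma monE (m : mi) : simx_mon (jacobi Sc Sci) m = bprod 0 Sc (shiftm m).
Proof. by rewrite /simx_mon mon_gen shm_enum. Qed.

Definition Wf (Q : {mpoly C[D]}) : simx :=
  fun b g => \sum_(m <- msupp Q) Q@_m * Sci (b + m)%MM g.

Lemma polyE Q : simx_poly Q (jacobi Sc Sci) = bprod 0 Sc (Wf Q).
Proof.
apply: functional_extensionality => a; apply: functional_extensionality => g.
rewrite /simx_poly; under eq_bigr do rewrite monE /bprod big_distrr.
rewrite exchange_big /=; apply: eq_bigr => b _.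
rewrite /Wf big_distrr /=; apply: eq_bigr => m _.
by rewrite /shiftm mulrCA.
Qed.

End Jac.
Section Main.
Variables (C : fieldType) (D : nat).
Local Notation mi := 'X_{1..D}.
Local Notation simx := (simx C D).

Lemma lin0 (u : {mpoly C[D]} -> C) : lin_functional u -> u 0 = 0.
Proof.
move=> hu; have := hu (-1) 0 0; rewrite scaler0 addr0 mulN1r => E.
by rewrite addNr in E.
Qed.

Lemma lin_sum (u : {mpoly C[D]} -> C) (r : seq mi) (c : mi -> C) (p : mi -> {mpoly C[D]}) :
  lin_functional u -> u (\sum_(m <- r) c m *: p m) = \sum_(m <- r) c m * u (p m).
Proof.
move=> hu; elim: r => [|m r IH]; first by rewrite !big_nil lin0.
by rewrite !big_cons hu IH.
Qed.

Variables (Sci Hc : simx).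
Hypothesis (Sl : lowc 0 Sci) (Hd : block_diag Hc).

Definition FF n x g := \sum_(b <- idx D n) (\sum_(e <- idx D n) Sci x e * Hc e b) * Sci g b.

Lemma FA x g n : (mdeg x < n)%N -> FF (mdeg x).+1 x g = FF n x g.
Proof.
move=> xn; rewrite /FF.
have inner b : \sum_(e <- idx D (mdeg x).+1) Sci x e * Hc e b =
               \sum_(e <- idx D n) Sci x e * Hc e b.
  by apply: sum_idx_ext => // e ex _; rewrite Sl ?mul0r // addn0.
under eq_bigr do rewrite inner.
apply: sum_idx_ext => // b bx _.
rewrite big1 ?mul0r // => e _.
case: (ltnP (mdeg x) (mdeg e)) => ex; first by rewrite Sl ?mul0r // addn0.
rewrite Hd ?mulr0 // => E; move: bx; rewrite -E ltnNge ex.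
by [].
Qed.

Lemma FB x g n m : (mdeg g < n)%N -> (n <= m)%N -> FF n x g = FF m x g.
Proof.
move=> gn nm; rewrite /FF.
rewrite (eq_big_seq (fun b => (\sum_(e <- idx D m) Sci x e * Hc e b) * Sci g b)).
  apply: sum_idx_ext => // b nb _; rewrite Sl ?mulr0 // addn0.
  exact: leq_trans gn nb.
move=> b; rewrite mem_idx => bn; congr (_ * _); apply: sum_idx_ext => // e ne _.
rewrite Hd ?mulr0 // => E; move: bn; rewrite -E ltnNge ne.
by [].
Qed.


Lemma RHS_expand (Q : {mpoly C[D]}) a g k :
  \sum_(b <- idx D k) (\sum_(e <- idx D k) Wf Sci Q a e * Hc e b) * simxT Sci b g
  = \sum_(m <- msupp Q) Q@_m * FF k (a + m)%MM g.
Proof.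
rewrite /FF; under [RHS]eq_bigr do rewrite big_distrr.
rewrite [RHS]exchange_big /=; apply: eq_bigr => b _.
under [RHS]eq_bigr do rewrite mulrA.
rewrite -big_distrl /=; congr (_ * _).
under [RHS]eq_bigr do rewrite big_distrr.
rewrite [RHS]exchange_big /=; apply: eq_bigr => e _.
rewrite /Wf big_distrl /=; apply: eq_bigr => m _.
by rewrite mulrA.
Qed.

End Main.
Lemma lowSH C D (A Hm : simx C D) : lowc 0 A -> block_diag Hm -> lowc 0 (bprod 0 A Hm).
Proof.
move=> Al Hd a b ab; rewrite /bprod big1_seq // => e /andP[_]; rewrite mem_idx => ea.
rewrite Hd ?mulr0 // => E; move: ab; rewrite addn0 -E; lia.
Qed.

Lemma trunc_fact C D k (G Sv Hm : simx C D) : block_lower_unitri' Sv -> block_diag Hm ->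
  G = bprod 0 (bprod 0 Sv Hm) (simxT Sv) ->
  trunc k G = trunc k Sv *m trunc k Hm *m (trunc k Sv)^T.
Proof.
move=> Sl Hd ->.
rewrite (trunc_bprod0 k (simxT Sv) (lowSH (low0 Sl) Hd)).
by rewrite (trunc_bprod0 k Hm (low0 Sl)) trunc_T.
Qed.

Lemma det_fact C D k (G Sv Hm : simx C D) : block_lower_unitri' Sv -> block_diag Hm ->
  G = bprod 0 (bprod 0 Sv Hm) (simxT Sv) -> \det (trunc k G) = \det (trunc k Hm).
Proof.
move=> Sl Hd E; rewrite (trunc_fact k Sl Hd E) !det_mulmx det_tr (det_unitri k Sl).
by rewrite mul1r mulr1.
Qed.

Unset Implicit Arguments.

Theorem mainTheorem1 (R : realType) (D : nat) (hD : (1 <= D)%N)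
    (u uc : {mpoly R[i][D]} -> R[i]) (Q2 : {mpoly R[i][D]})
    (hu : lin_functional u) (huc : lin_functional uc)
    (hQ : forall p : {mpoly R[i][D]}, uc (Q2 * p) = u p)
    (qd_u : quasi_definite u) (qd_uc : quasi_definite uc)
    (S Sinv H Sc Scinv Hc : simx R[i] D)
    (hS : quasi_tau_fact (moment u) S Sinv H)
    (hSc : quasi_tau_fact (moment uc) Sc Scinv Hc) :
  forall k : nat, (1 <= k)%N ->
    \det (trunc k (simx_poly Q2 (jacobi Sc Scinv)))
      = \prod_(l < k) (\det (blk l H) / \det (blk l Hc))
    /\ \det (trunc k (simx_poly Q2 (jacobi Sc Scinv))) != 0.
Proof.
move=> k k1.
case: hS => [[Sl Sil] [SS' S'S] Hd Gd].
case: hSc => [[Scl Scil] [ScSci SciSc] Hcd Gcd].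
have detP : \det (trunc k (simx_poly Q2 (jacobi Sc Scinv))) = \det (trunc k (Wf Scinv Q2)).
  by rewrite (polyE Scl Scil SciSc ScSci Q2) (trunc_bprod0 k (Wf Scinv Q2) (low0 Scl)) det_mulmx (det_unitri k Scl) mul1r.
have dG : \det (trunc k (moment u)) = \det (trunc k H) by exact: (det_fact k Sil Hd Gd).
have dGc : \det (trunc k (moment uc)) = \det (trunc k Hc) by exact: (det_fact k Scil Hcd Gcd).
have nH : \det (trunc k H) != 0 by rewrite -dG; apply: qd_u.
have nHc : \det (trunc k Hc) != 0 by rewrite -dGc; apply: qd_uc.
have G2 : trunc k (moment u) = trunc k (Wf Scinv Q2) *m trunc k Hc *m (trunc k Scinv)^T.
  rewrite -trunc_T /trunc !sqmx_mul; apply/matrixP => i j; rewrite !mxE.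
  set a := nth 0%MM (idx D k) i; set g := nth 0%MM (idx D k) j.
  have gk : (mdeg g < k)%N by rewrite -mem_idx; apply: mem_nth.
  rewrite (RHS_expand Scinv Hc Q2 a g k) /moment -hQ {1}(mpolyE Q2) mulr_suml.
  under eq_bigr do rewrite -scalerAl.
  rewrite lin_sum //; apply: eq_bigr => m _; congr (_ * _).
  have -> : 'X_[m] * ('X_[a] * 'X_[g]) = 'X_[(a + m)%MM] * 'X_[g] :> {mpoly R[i][D]}.
    by rewrite mpolyXD mulrA [X in X * _]mulrC.
  change (moment uc (a + m)%MM g = FF Scinv Hc k (a + m)%MM g).
  rewrite Gcd /bprod /simxT !addn0.
  change (FF Scinv Hc (mdeg (a + m)%MM).+1 (a + m)%MM g = FF Scinv Hc k (a + m)%MM g).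
  have hK1 : ((mdeg (a+m)%MM).+1 <= (mdeg (a+m)%MM).+1 + k)%N := leq_addr _ _.
  have hK2 : (k <= (mdeg (a+m)%MM).+1 + k)%N := leq_addl _ _.
  by rewrite (FA (low0 Scil) Hcd g hK1) (FB (low0 Scil) Hcd (a+m)%MM gk hK2).
have dW : \det (trunc k (Wf Scinv Q2)) * \det (trunc k Hc) = \det (trunc k H).
  by rewrite -dG G2 !det_mulmx det_tr (det_unitri k Scil) mulr1.
have eW : \det (trunc k (Wf Scinv Q2)) = \det (trunc k H) / \det (trunc k Hc).
  by rewrite -dW mulfK.
rewrite detP eW; split.
  by rewrite !det_blockdiag // prodf_div.
by rewrite mulf_neq0 ?invr_eq0.
Qed.
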